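(* Let $S=B_2(q)\cong O_5(q)$, where $q=2^f>2$. If $f\neq3$, let $r$ be a Zsigmondy prime of $2^{2f}-1$ with respect to $(2,2f)$, i.e. a prime with the multiplicative order of $2$ modulo $r$ equal to $2f$; if $f=3$, let $r=q-1=7$. If $R\in\mathrm{Syl}_r(S)$, then $C_{\widehat{A}_0}(R)\le S$.
   Context: $\widehat{A}_0$ denotes the subgroup of $\mathrm{Aut}(S)$ generated by $S$ (identified with $\mathrm{Inn}(S)$) and all field automorphisms of $S$. *)

(* Defs.v *)
From HB Require Import structures.
From mathcomp Require Import all_boot all_order all_algebra all_fingroup all_solvable all_field.
Set Implicit Arguments. Unset Strict Implicit. Unset Printing Implicit Defensive.
Import GRing.Theory.
Local Open Scope ring_scope.
Local Open Scope group_scope.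

Definition mult_order_is (a r n : nat) : Prop :=
  ((1 < r)%N /\ (0 < n)%N /\ (a ^ n = 1 %[mod r])%N /\
  (forall k : nat, (0 < k)%N -> (k < n)%N -> (a ^ k <> 1 %[mod r])%N)).

(* Standard alternating (symplectic) form on F^4: J i j = 1 iff i + j = 3.
   Over a field of characteristic 2 it is alternating (zero diagonal) and
   nondegenerate. *)
Definition sympJ (F : fieldType) : 'M[F]_4 :=
  \matrix_(i < 4, j < 4) (if (i + j == 3)%N then 1%R else 0%R).

(* S = Sp_4(F) (~ B_2(q) ~ O_5(q) for F = GF(2^f)), inside GL_4(F). *)
Definition Sp4 (F : finFieldType) : {set {'GL_4[F]}} :=
  [set g : {'GL_4[F]} | GLval g *m sympJ F *m (GLval g)^T == sympJ F].

Definition InnS (F : finFieldType) : {set {perm {'GL_4[F]}}} :=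
  [set a in Aut (Sp4 F) | [exists x in Sp4 F, [forall y in Sp4 F, a y == y ^ x]]].

Definition is_field_aut (F : finFieldType) (s : {perm F}) : bool :=
  [forall x : F, forall y : F, (s (x + y)%R == s x + s y)%R && (s (x * y)%R == s x * s y)%R]
  && (s 1%R == 1%R).

Definition FieldAutS (F : finFieldType) : {set {perm {'GL_4[F]}}} :=
  [set a in Aut (Sp4 F) | [exists s : {perm F}, is_field_aut s &&
      [forall y in Sp4 F, GLval (a y) == map_mx s (GLval y)]]].

Definition Ahat0 (F : finFieldType) : {set {perm {'GL_4[F]}}} :=
  <<InnS F :|: FieldAutS F>>.

(* Main.v *)
Require Import Defs.
From HB Require Import structures.
From mathcomp Require Import all_boot all_order all_algebra all_fingroup all_solvable all_field.
From mathcomp Require Import ring zify.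
Set Implicit Arguments. Unset Strict Implicit. Unset Printing Implicit Defensive.
Import GRing.Theory.
Definition sfun (F : finFieldType) (s : {perm F}) := fun x : F => s x.
Definition mapGL (F : finFieldType) n (s : {perm F}) (u : {'GL_n[F]}) : {'GL_n[F]} :=
  insubd u (map_mx (sfun s) (GLval u)).

Lemma GLval_inj (F : finFieldType) n : injective (@GLval n F).
Proof. exact: val_inj. Qed.

Section FA.
Local Open Scope ring_scope.
Variables (F : finFieldType) (s : {perm F}) (hs : is_field_aut s).
Lemma sfunD x y : sfun s (x + y) = sfun s x + sfun s y.
Proof. by move: hs => /andP[/forallP/(_ x)/forallP/(_ y)/andP[/eqP]]. Qed.
Lemma sfunM x y : sfun s (x * y) = sfun s x * sfun s y.
Proof. by move: hs => /andP[/forallP/(_ x)/forallP/(_ y)/andP[_ /eqP]]. Qed.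
Lemma sfun1 : sfun s 1 = 1.
Proof. by move: hs => /andP[_ /eqP]. Qed.
Lemma sfun0 : sfun s 0 = 0.
Proof. by apply/(addrI (sfun s 0)); rewrite -sfunD !addr0. Qed.
Lemma sfun_nmod : nmod_morphism (sfun s).
Proof. by split; [exact: sfun0 | exact: sfunD]. Qed.
HB.instance Definition _ := GRing.isNmodMorphism.Build F F (sfun s) sfun_nmod.
Lemma sfun_mon : monoid_morphism (sfun s).
Proof. by split; [exact: sfun1 | exact: sfunM]. Qed.
HB.instance Definition _ := GRing.isMonoidMorphism.Build F F (sfun s) sfun_mon.

Lemma mapGLE n (u : {'GL_n[F]}) : GLval (mapGL s u) = map_mx (sfun s) (GLval u).
Proof. by rewrite /mapGL insubdK // unfold_in /= map_unitmx GL_unitmx. Qed.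

Lemma mapGLM n (u v : {'GL_n[F]}) : mapGL s (u * v)%g = (mapGL s u * mapGL s v)%g.
Proof. by apply: GLval_inj; rewrite mapGLE !GL_ME !mapGLE map_mxM. Qed.

Lemma mapGL1 n : mapGL s (1 : {'GL_n[F]})%g = 1%g.
Proof. by apply: GLval_inj; rewrite mapGLE GL_1E map_mx1. Qed.

Lemma mapGLV n (u : {'GL_n[F]}) : mapGL s (u^-1)%g = ((mapGL s u)^-1)%g.
Proof. by apply: (mulgI (mapGL s u)); rewrite -mapGLM !mulgV mapGL1. Qed.

Lemma mapGLJ n (u v : {'GL_n[F]}) : mapGL s (u ^ v)%g = (mapGL s u ^ mapGL s v)%g.
Proof. by rewrite /conjg !mapGLM mapGLV. Qed.

Lemma trace_mapGL n (u : {'GL_n[F]}) : \tr (GLval (mapGL s u)) = s (\tr (GLval u)).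
Proof. by rewrite mapGLE trace_map_mx. Qed.

Lemma sympJ_map : map_mx (sfun s) (sympJ F) = sympJ F.
Proof. by apply/matrixP=> i j; rewrite !mxE; case: ifP; rewrite ?sfun1 ?sfun0. Qed.

Lemma Sp4_map u : u \in Sp4 F -> mapGL s u \in Sp4 F.
Proof.
rewrite !inE !mapGLE => /eqP H; apply/eqP.
by rewrite map_trmx -{1}sympJ_map -!map_mxM H sympJ_map.
Qed.
End FA.

Lemma field_aut1 (F : finFieldType) : is_field_aut (1%g : {perm F}).
Proof.
apply/andP; split; last by rewrite perm1.
by apply/forallP=> x; apply/forallP=> y; rewrite !perm1 !eqxx.
Qed.

Lemma field_autM (F : finFieldType) (s1 s2 : {perm F}) :
  is_field_aut s1 -> is_field_aut s2 -> is_field_aut (s1 * s2)%g.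
Proof.
move=> h1 h2; apply/andP; split; last first.
  by rewrite permM; have := sfun1 h2; have := sfun1 h1; rewrite /sfun => -> ->.
apply/forallP=> x; apply/forallP=> y; rewrite !permM.
have := sfunD h1 x y; have := sfunM h1 x y; rewrite /sfun => -> ->.
have := sfunD h2 (s1 x) (s1 y); have := sfunM h2 (s1 x) (s1 y); rewrite /sfun => -> ->.
by rewrite !eqxx.
Qed.

Lemma field_autV (F : finFieldType) (s : {perm F}) :
  is_field_aut s -> is_field_aut (s^-1)%g.
Proof.
move=> h; apply/andP; split; last first.
  by apply/eqP; apply: (@perm_inj _ s); rewrite permKV; have := sfun1 h.
apply/forallP=> x; apply/forallP=> y; apply/andP; split; apply/eqP; apply: (@perm_inj _ s).
  by have := sfunD h (s^-1 x)%g (s^-1 y)%g; rewrite /sfun !permKV => ->.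
by have := sfunM h (s^-1 x)%g (s^-1 y)%g; rewrite /sfun !permKV => ->.
Qed.

Lemma mapGL_comp (F : finFieldType) n (s1 s2 : {perm F}) (u : {'GL_n[F]}) :
  is_field_aut s1 -> is_field_aut s2 ->
  mapGL (s1 * s2)%g u = mapGL s2 (mapGL s1 u).
Proof.
move=> h1 h2; apply: GLval_inj => /=.
rewrite (mapGLE (field_autM h1 h2)) (mapGLE h2) (mapGLE h1) -map_mx_comp.
by apply: eq_map_mx => x; rewrite /sfun /= permM.
Qed.

Lemma mapGL_id (F : finFieldType) n (u : {'GL_n[F]}) : mapGL 1%g u = u.
Proof.
apply: GLval_inj => /=; rewrite (mapGLE (field_aut1 F)) map_mx_id // => x.
by rewrite /sfun perm1.
Qed.
Section GroupPart.
Variable F : finFieldType.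
Local Open Scope group_scope.

Lemma Sp4_group_set : group_set (Sp4 F).
Proof.
apply/group_setP; split.
  by rewrite inE GL_1E mul1mx trmx1 mulmx1.
move=> x y; rewrite !inE GL_ME => /eqP Hx /eqP Hy.
rewrite [(_ * _)%R]/= trmx_mul !mulmxA -(mulmxA (GLval x) (GLval y)).
by rewrite -(mulmxA _ _ (GLval y)^T) Hy Hx.
Qed.
Canonical Sp4_group := Group Sp4_group_set.

Definition Hset : {set {perm {'GL_4[F]}}} :=
  [set a in Aut (Sp4 F) | [exists g in Sp4 F, exists s : {perm F},
     is_field_aut s && [forall y in Sp4 F, a y == mapGL s (y ^ g)]]].

Lemma HsetP a : reflect (a \in Aut (Sp4 F) /\ exists2 g, g \in Sp4 F & exists2 s : {perm F},
     is_field_aut s & forall y, y \in Sp4 F -> a y = mapGL s (y ^ g)) (a \in Hset).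
Proof.
apply: (iffP idP).
  rewrite inE => /andP[Aa /exists_inP[g Sg /existsP[s /andP[hs /forall_inP Hy]]]].
  by split=> //; exists g => //; exists s => // y /Hy /eqP.
case=> Aa [g Sg [s hs Hy]]; rewrite inE Aa /=; apply/exists_inP; exists g => //.
by apply/existsP; exists s; rewrite hs /=; apply/forall_inP => y /Hy ->.
Qed.

Lemma Hset_group_set : group_set Hset.
Proof.
apply/group_setP; split.
  apply/HsetP; split; first exact: group1.
  exists 1; first exact: group1.
  by exists 1; [exact: field_aut1 | move=> y _; rewrite perm1 conjg1 mapGL_id].
move=> a1 a2 /HsetP[A1 [g1 S1 [s1 h1 E1]]] /HsetP[A2 [g2 S2 [s2 h2 E2]]].
apply/HsetP; split; first exact: groupM.
pose g2' := mapGL (s1^-1) g2.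
have S2' : g2' \in Sp4 F by apply: Sp4_map => //; exact: field_autV.
have Eg2 : mapGL s1 g2' = g2.
  by rewrite -mapGL_comp ?mulVg ?mapGL_id //; exact: field_autV.
exists (g1 * g2'); first exact: groupM.
exists (s1 * s2); first exact: field_autM.
move=> y Sy; rewrite permM E1 //.
have Sa1y : mapGL s1 (y ^ g1) \in Sp4 F by rewrite -E1 //; exact: (Aut_closed A1).
rewrite E2 // -Eg2 -(mapGLJ h1) mapGL_comp //.
by rewrite conjgM.
Qed.
Canonical Hset_group := Group Hset_group_set.

Lemma Ahat0_sub : Ahat0 F \subset Hset.
Proof.
rewrite /Ahat0 gen_subG subUset; apply/andP; split; apply/subsetP => a.
  rewrite inE => /andP[Aa /exists_inP[x Sx /forall_inP Hy]].
  apply/HsetP; split=> //; exists x => //; exists 1; first exact: field_aut1.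
  by move=> y /Hy /eqP ->; rewrite mapGL_id.
rewrite inE => /andP[Aa /existsP[s /andP[hs /forall_inP Hy]]].
apply/HsetP; split=> //; exists 1; first exact: group1.
exists s => // y /Hy /eqP E; rewrite conjg1; apply: GLval_inj.
by rewrite E (mapGLE hs).
Qed.
End GroupPart.
Section Mx2.
Local Open Scope ring_scope.
Variable F : comNzRingType.
Lemma det2 (M : 'M[F]_2) : \det M = M 0 0 * M 1 1 - M 0 1 * M 1 0.
Proof.
rewrite (expand_det_row _ 0) !big_ord_recl big_ord0 /cofactor !det_mx11 !mxE /=.
rewrite (_ : lift 0 0 = 1 :> 'I_2); last by apply: val_inj.
rewrite (_ : ord0 = 0 :> 'I_2); last by apply: val_inj.
rewrite (_ : lift 1 0 = 0 :> 'I_2); last by apply: val_inj.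
by rewrite /bump /= expr0 expr1 !mul1r addr0 mulN1r mulrN.
Qed.

Lemma tr2 (M : 'M[F]_2) : \tr M = M 0 0 + M 1 1.
Proof. by rewrite /mxtrace !big_ord_recl big_ord0 addr0; congr (M _ _ + M _ _); apply: val_inj. Qed.

Lemma mul2E (A B : 'M[F]_2) i j : (A *m B) i j = A i 0 * B 0 j + A i 1 * B 1 j.
Proof.
rewrite !mxE !big_ord_recl big_ord0 addr0.
by congr (A i _ * B _ j + A i _ * B _ j); apply: val_inj.
Qed.

Lemma ord2P (P : 'I_2 -> Prop) : P 0 -> P 1 -> forall i, P i.
Proof.
move=> P0 P1 [[|[|i]] Hi].
- by rewrite (_ : Ordinal Hi = 0) //; apply: val_inj.
- by rewrite (_ : Ordinal Hi = 1) //; apply: val_inj.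
- by [].
Qed.

Lemma CH2 (M : 'M[F]_2) : M * M = \tr M *: M - (\det M)%:M.
Proof.
apply/matrixP; apply: ord2P; apply: ord2P;
rewrite [(M * M) _ _]mul2E !mxE det2 tr2 /=; ring.
Qed.
End Mx2.
Section Frob.
Local Open Scope ring_scope.
Lemma frob2 (R : pzRingType) (x y : R) : (1 + 1 : R) = 0 -> GRing.comm x y ->
  forall e, (x + y) ^+ (2 ^ e) = x ^+ (2 ^ e) + y ^+ (2 ^ e).
Proof.
move=> two0 cxy; elim=> [|e IH]; first by rewrite !expr1.
rewrite expnSr !exprM IH.
have c' : GRing.comm (x ^+ (2 ^ e)) (y ^+ (2 ^ e)) by apply: commrX; apply: commr_sym; apply: commrX; apply: commr_sym.
have aa : forall a : R, a + a = 0 by move=> a; rewrite -{1 2}(mul1r a) -mulrDl two0 mul0r.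
by rewrite !expr2 mulrDl !mulrDr c' addrA -(addrA (_ * _)) aa addr0.
Qed.
End Frob.

Section KField.
Local Open Scope ring_scope.
Variables (F : finFieldType) (s : {perm F}) (hs : is_field_aut s).
Definition Kf := [set x : F | s x == x].
Lemma Kf_group_set : group_set Kf.
Proof.
apply/group_setP; split; first by rewrite inE FinRing.zmod1gE -[s 0]/(sfun s 0) sfun0.
move=> x y; rewrite !inE FinRing.zmodMgE => /eqP hx /eqP hy.
by have := sfunD hs x y; rewrite /sfun hx hy => ->.
Qed.
End KField.
Section KField2.
Local Open Scope ring_scope.
Variables (F : finFieldType) (s : {perm F}) (hs : is_field_aut s).
Canonical Kf_group := Group (Kf_group_set hs).

Lemma Kf0 : 0 \in Kf s. Proof. by rewrite inE -[s 0]/(sfun s 0) sfun0. Qed.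
Lemma Kf1 : 1 \in Kf s. Proof. by rewrite inE -[s 1]/(sfun s 1) sfun1. Qed.
Lemma KfD x y : x \in Kf s -> y \in Kf s -> x + y \in Kf s.
Proof. by rewrite !inE => /eqP hx /eqP hy; have := sfunD hs x y; rewrite /sfun hx hy => ->. Qed.
Lemma KfM x y : x \in Kf s -> y \in Kf s -> x * y \in Kf s.
Proof. by rewrite !inE => /eqP hx /eqP hy; have := sfunM hs x y; rewrite /sfun hx hy => ->. Qed.

Lemma Kf_dvd : (#|Kf s| %| #|F|)%N.
Proof. by rewrite -cardsT; apply: cardSg; apply: subsetT. Qed.

Definition Uf := [set u : {unit F} | val u \in Kf s].
Lemma Uf_group_set : group_set Uf.
Proof.
apply/group_setP; split; first by rewrite inE FinRing.val_unit1 Kf1.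
move=> u v; have := @KfM (val u) (val v); rewrite !inE FinRing.val_unitM; exact.
Qed.
Canonical Uf_group := Group Uf_group_set.

Lemma card_Uf : #|Uf| = (#|Kf s|).-1.
Proof.
rewrite (cardsD1 0 (Kf s)) Kf0 add1n /= -(card_imset _ val_inj).
apply: eq_card => x; rewrite in_setD1; apply/imsetP/andP.
  case=> u; rewrite inE => Hu ->; split=> //.
  by apply/eqP => h; have := valP u; rewrite h unitr0.
case=> nz Kx; have ux : x \is a GRing.unit by rewrite unitfE.
by exists (insubd (1%g : {unit F}) x); rewrite ?inE insubdK //; rewrite inE in Kx.
Qed.

Lemma Kf_exp x : x \in Kf s -> x ^+ #|Kf s| = x.
Proof.
move=> Kx; have [->|nz] := eqVneq x 0.
  have n0 : (0 < #|Kf s|)%N by apply/card_gt0P; exists 0%R; exact: Kf0.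
  by rewrite expr0n; case: (#|Kf s|) n0.
have ux : x \is a GRing.unit by rewrite unitfE.
have Uu : (insubd (1%g : {unit F}) x) \in Uf by rewrite inE insubdK.
have := expg_cardG Uu; rewrite card_Uf => /(congr1 val).
rewrite FinRing.val_unitX FinRing.val_unit1 insubdK // => h.
have n0 : (0 < #|Kf s|)%N by apply/card_gt0P; exists x.
by rewrite -(prednK n0) exprS h mulr1.
Qed.
End KField2.
Section Char2.
Local Open Scope ring_scope.
Lemma aa2 (R : pzRingType) : (1 + 1 : R) = 0 -> forall x : R, x + x = 0.
Proof. by move=> h x; rewrite -{1 2}(mul1r x) -mulrDl h mul0r. Qed.
Lemma opp2 (R : pzRingType) : (1 + 1 : R) = 0 -> forall x : R, - x = x.
Proof. by move=> h x; rewrite -[-x]addr0 -(aa2 h x) addrA addNr add0r. Qed.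

Lemma bez (R : pzRingType) (x : R) r m : prime r -> x ^+ r = 1 -> x ^+ m = 1 -> x != 1 -> (r %| m)%N.
Proof.
move=> pr xr xm; apply: contraR => ndvd.
have cop : coprime r m by rewrite prime_coprime.
have [a _ ] := Bezoutl m (prime_gt0 pr); rewrite (eqP cop) => /dvdnP[k hk].
have : x ^+ (1 + a * m)%N = x ^+ (k * r)%N by rewrite hk.
rewrite exprD expr1 [(a * m)%N]mulnC exprM xm expr1n mulr1 [(k * r)%N]mulnC exprM xr expr1n => ->.
by rewrite eqxx.
Qed.

Lemma detX2 (F : comNzRingType) (M : 'M[F]_2) n : \det (M ^+ n) = \det M ^+ n.
Proof. by elim: n => [|n IH]; rewrite ?det1 // !exprS detM IH. Qed.

Lemma det_add_scal (F : comNzRingType) (M : 'M[F]_2) (b : F) :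
  \det (M + b *: 1) = \det M + b * \tr M + b ^+ 2.
Proof. by rewrite !det2 tr2 !mxE /=; ring. Qed.

Lemma tr1_2 (F : comNzRingType) : \tr (1 : 'M[F]_2) = 1 + 1.
Proof. by rewrite tr2 !mxE. Qed.
End Char2.
Section Key.
Local Open Scope ring_scope.
Variables (F : finFieldType) (s : {perm F}) (hs : is_field_aut s).
Variable (two0 : (1 + 1 : F) = 0).

Lemma two0M : (1 + 1 : 'M[F]_2) = 0.
Proof. by rewrite -{1 2}(scale1r (1 : 'M[F]_2)) -scalerDl two0 scale0r. Qed.

Lemma key (f : nat) (z : 'M[F]_2) (r : nat) :
  #|F| = (2 ^ f)%N -> prime r -> odd r ->
  \det z = 1 -> z ^+ r = 1 -> z != 1 -> s (\tr z) = \tr z -> (exists x, s x != x) ->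
  exists e, [/\ (0 < e)%N, (e < f)%N & (r %| (2 ^ e) ^ 2 - 1)%N].
Proof.
move=> cF pr oddr detz zr z1 st [x0 sx0].
set t := \tr z.
have Kt : t \in Kf s by rewrite inE st.
have [e _ eN] : exists2 e, (e <= f)%N & #|Kf s| = (2 ^ e)%N.
  by apply/(@dvdn_pfactor 2 _ f isT); rewrite -cF; apply: Kf_dvd.
have Nlt : (#|Kf s| < #|F|)%N.
  rewrite -cardsT; apply: proper_card; rewrite properT; apply/negP => /eqP KT.
  have : x0 \in Kf s by rewrite KT inE.
  by rewrite inE (negbTE sx0).
have ef : (e < f)%N by rewrite -(ltn_exp2l _ _ (isT : (1 < 2)%N)) -eN -cF.
have Nge2 : (2 <= #|Kf s|)%N.
  have <- : #|[set (0 : F); 1]| = 2%N by rewrite cards2 eq_sym oner_neq0.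
  apply: subset_leq_card.
  by apply/subsetP => y; rewrite in_set2 => /orP[] /eqP ->; [exact: Kf0 | exact: Kf1].
have e0 : (0 < e)%N by case: e eN {ef} => [|//] eN; rewrite eN in Nge2.
exists e; split => //.
set N := #|Kf s| in Nlt Nge2 eN.
have CHz : z * z = t *: z + 1.
  by rewrite CH2 detz -/t (opp2 two0M).
have span : forall n, exists a b, [/\ a \in Kf s, b \in Kf s & z ^+ n = a *: z + b *: 1].
  elim=> [|n [a [b [Ka Kb IH]]]].
    by exists 0, 1; rewrite (Kf0 hs) (Kf1 hs) scale0r add0r scale1r expr0.
  exists (a * t + b), a; split; first by apply: (KfD hs) => //; apply: (KfM hs).
    by [].
  rewrite exprSr IH mulrDl -!scalerAl CHz mul1r scalerDr scalerA scalerDl.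
  by rewrite addrAC.
have [a [b [Ka Kb wE]]] := span N.
set w := z ^+ N in wE.
have Pw : w * w = t *: w + 1.
  have h0 : (z * z + t *: z + 1) ^+ N = 0.
    by rewrite CHz -addrA (aa2 two0M) expr0n; case: (N) Nge2.
  have c1 : GRing.comm (z * z + t *: z) 1 by rewrite /GRing.comm mulr1 mul1r.
  have c2 : GRing.comm (z * z) (t *: z).
    by rewrite /GRing.comm -scalerAl -scalerAr mulrA.
  rewrite eN (frob2 two0M c1) (frob2 two0M c2) in h0.
  rewrite expr1n exprZn -eN (Kf_exp hs Kt) -/w in h0.
  have zz : (z * z) ^+ N = w * w by rewrite -expr2 -exprM mulnC exprM expr2.
  rewrite zz in h0.
  by apply/eqP; rewrite -(opp2 two0M (t *: w + 1)) -addr_eq0 addrA h0.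
have detw : \det w = 1 by rewrite detX2 detz expr1n.
have trw : \tr w = a * t by rewrite wE mxtraceD !mxtraceZ tr1_2 two0 mulr0 addr0.
have CHw : w * w = (a * t) *: w + 1.
  by rewrite CH2 detw trw (opp2 two0M).
have at_t : a * t = t.
  have : (a * t - t) *: w = 0.
    have h : t *: w = (a * t) *: w by apply: (addIr 1); rewrite -Pw -CHw.
    by rewrite scalerBl -h subrr.
  move/eqP; rewrite scaler_eq0 => /orP[]; first by rewrite subr_eq0 => /eqP.
  move=> /eqP w0; move: Pw; rewrite w0 mulr0 scaler0 add0r => /esym/eqP.
  by rewrite oner_eq0.
have t0 : t != 0.
  apply/negP => /eqP t0; move: CHz; rewrite t0 scale0r add0r -expr2 => z2.
  have := bez pr zr z2 z1; rewrite dvdn_prime2 //; move=> /eqP r2.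
  by rewrite r2 in oddr.
have a1 : a = 1.
  by apply: (mulIf t0); rewrite mul1r.
rewrite a1 scale1r in wE.
have : \det w = 1 by [].
rewrite wE det_add_scal detz -/t => hb.
have hb' : b * (b + t) = 0.
  rewrite mulrDr mulrC; apply: (addrI 1); rewrite addr0 addrA -expr2.
  by rewrite -[in RHS]hb addrAC [_ + b ^+ 2]addrC addrA.
have zu : z \is a GRing.unit by rewrite unitmxE detz unitr1.
have sq : ((2 ^ e) ^ 2 - 1 = (2 ^ e - 1) * (2 ^ e + 1))%N by rewrite -subn_sqr exp1n.
rewrite sq.
move/eqP: hb'; rewrite mulf_eq0 => /orP[] /eqP hb2.
  have : z ^+ N.-1 = 1.
    apply: (mulIr zu); rewrite mul1r -exprSr prednK; last by case: (N) Nge2.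
    by rewrite -/w wE hb2 scale0r addr0.
  by move/(bez pr zr)/(_ z1); rewrite eN subn1 => h; apply: dvdn_mulr.
have bt : b = t by rewrite -(opp2 two0 t); apply/eqP; rewrite -subr_eq0 opprK hb2.
have : z ^+ N.+1 = 1.
  rewrite exprS -/w wE bt mulrDr -scalerAr mulr1 CHz -addrA addrC -addrA (aa2 two0M).
  by rewrite addr0.
by move/(bez pr zr)/(_ z1); rewrite eN addn1 => h; apply: dvdn_mull.
Qed.
End Key.
Section Emb.
Local Open Scope ring_scope.
Variable F : finFieldType.

Definition c4 (i : 'I_4) : option 'I_2 :=
  match val i with 0%N => Some (0 : 'I_2) | 3%N => Some (1 : 'I_2) | _ => None end.

Definition emb (A : 'M[F]_2) : 'M[F]_4 :=
  \matrix_(i < 4, j < 4) match c4 i, c4 j with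
                         | Some a, Some b => A a b
                         | _, _ => (i == j)%:R end.

Lemma ord4P (P : 'I_4 -> Prop) :
  P 0 -> P 1 -> P 2 -> P 3 -> forall i, P i.
Proof.
move=> P0 P1 P2 P3 [[|[|[|[|i]]]] Hi].
- by rewrite (_ : Ordinal Hi = 0) //; apply: val_inj.
- by rewrite (_ : Ordinal Hi = 1) //; apply: val_inj.
- by rewrite (_ : Ordinal Hi = 2) //; apply: val_inj.
- by rewrite (_ : Ordinal Hi = 3) //; apply: val_inj.
- by [].
Qed.

Lemma mul4E (A B : 'M[F]_4) i j :
  (A *m B) i j = A i 0 * B 0 j + A i 1 * B 1 j + A i 2 * B 2 j + A i 3 * B 3 j.
Proof.
rewrite !mxE !big_ord_recl big_ord0 addr0 !addrA.
by congr (A i _ * B _ j + A i _ * B _ j + A i _ * B _ j + A i _ * B _ j); apply: val_inj.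
Qed.

Lemma emb_mul (A B : 'M[F]_2) : emb (A *m B) = emb A *m emb B.
Proof.
apply/matrixP; apply: ord4P; apply: ord4P; rewrite mul4E !mxE /= ?mul2E;
  rewrite ?mulr0 ?mul0r ?mulr1 ?mul1r ?addr0 ?add0r //.
Qed.

Lemma emb1 : emb 1%:M = 1%:M.
Proof. by apply/matrixP; apply: ord4P; apply: ord4P; rewrite !mxE /= ?mxE. Qed.

Lemma emb_mulR (A B : 'M[F]_2) : emb (A * B) = emb A * emb B.
Proof. exact: emb_mul. Qed.

Lemma embX (A : 'M[F]_2) n : emb (A ^+ n) = emb A ^+ n.
Proof. by elim: n => [|n IH]; rewrite ?expr0 ?emb1 // !exprS -IH -emb_mulR. Qed.

Lemma emb_tr (A : 'M[F]_2) : \tr (emb A) = \tr A + 1 + 1.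
Proof.
by rewrite tr2 /mxtrace !big_ord_recl big_ord0 !mxE /= addr0; ring.
Qed.

Lemma emb_sp (two0 : (1 + 1 : F) = 0) (z : 'M[F]_2) : \det z = 1 ->
  emb z *m sympJ F *m (emb z)^T = sympJ F.
Proof.
rewrite det2 => dz.
apply/matrixP; apply: ord4P; apply: ord4P; rewrite !mul4E !mxE /=;
  rewrite ?mulr1n ?mulr0n ?mulr0 ?mul0r ?mulr1 ?mul1r ?addr0 ?add0r //.
all: try by rewrite mulrC (aa2 two0).
all: try by ring.
all: have dz' : z 0 1 * z 1 0 + z 0 0 * z 1 1 = 1 by rewrite addrC -(opp2 two0 (z 0 1 * z 1 0)).
all: rewrite -dz'; ring.

Qed.
End Emb.
Lemma GLvalX (F : finFieldType) n (u : {'GL_n[F]}) k : GLval (u ^+ k)%g = (GLval u ^+ k)%R.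
Proof. by elim: k => [|k IH]; rewrite ?expg0 ?expr0 // expgS exprS GL_ME IH. Qed.

Section ZExist.
Local Open Scope ring_scope.
Variables (F : finFieldType) (two0 : (1 + 1 : F) = 0).

Definition dg (m : F) : 'M[F]_2 :=
  \matrix_(i, j) (if i == j then (if i == 0 then m else m^-1) else 0).

Lemma dgX m n : (dg m) ^+ n = \matrix_(i, j) (if i == j then (if i == 0 then m ^+ n else m^-1 ^+ n) else 0).
Proof.
elim: n => [|n IH].
  by apply/matrixP; apply: ord2P; apply: ord2P; rewrite !mxE.
rewrite exprSr IH; apply/matrixP; apply: ord2P; apply: ord2P;
  rewrite mul2E !mxE /= ?mulr0 ?mul0r ?addr0 ?add0r ?exprSr //.
Qed.

Lemma z_exists_7 : #|F| = 8%N -> exists z : 'M[F]_2, [/\ \det z = 1, z ^+ 7 = 1 & z != 1].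
Proof.
move=> cF.
have [m Hm] : exists m : F, m \notin [set 0; 1].
  case: (pickP (fun x : F => x \notin [set 0; 1])) => [m Hm | H]; first by exists m.
  have : (#|[set: F]| <= #|[set (0 : F)%R; 1%R]|)%N.
    by apply: subset_leq_card; apply/subsetP => x _; have := H x; rewrite /= => /negbFE.
  by rewrite cardsT cF cards2; case: (_ != _).
move: Hm; rewrite in_set2 negb_or => /andP[m0 m1].
have m7 : m ^+ 7 = 1.
  apply: (mulIf m0); rewrite mul1r -exprSr -cF; exact: expf_card.
exists (dg m); split.
- by rewrite det2 !mxE /= mulr0 subr0 mulfV.
- by rewrite dgX; apply/matrixP; apply: ord2P; apply: ord2P; rewrite !mxE //= exprVn m7 invr1.
- by apply/negP => /eqP /matrixP /(_ 0 0); rewrite !mxE /=; apply/eqP.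
Qed.

Lemma z_exists_gen f r : #|F| = (2 ^ f)%N -> prime r -> mult_order_is 2 r (2 * f) ->
  exists z : 'M[F]_2, [/\ \det z = 1, z ^+ r = 1 & z != 1].
Proof.
move=> cF pr [r1 [f0 [h2f hk]]].
set q := #|F| in cF *.
have q1 : (1 <= q)%N by rewrite cF expn_gt0.
have rq2 : (r %| (q - 1) * (q + 1))%N.
  have : (2 ^ (2 * f) == 1 %[mod r])%N by apply/eqP.
  rewrite eqn_mod_dvd ?expn_gt0 // mulnC expnM -cF.
  have -> : ((q - 1) * (q + 1) = q ^ 2 - 1)%N by rewrite -subn_sqr exp1n.
  by [].
have rq : ~~ (r %| q - 1)%N.
  apply/negP => h; apply: (hk f); try lia.
  by apply/eqP; rewrite eqn_mod_dvd ?expn_gt0 // -cF.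
have rGL : (r %| #|('GL_2[F])%g|)%N.
  rewrite card_GL_2 -/q; apply: dvdn_trans rq2 _.
  have -> : (q * q.-1 ^ 2 * q.+1 = (q * (q - 1)) * ((q - 1) * (q + 1)))%N.
    by rewrite subn1 addn1 expnS expn1 !mulnA.
  exact: dvdn_mull.
have [u _ ou] := Cauchy pr rGL.
exists (GLval u); split; last first.
- apply/negP => /eqP h; have : u = 1%g by apply: GLval_inj; rewrite h.
  by move/eqP; rewrite -order_eq1 ou => /eqP r1'; rewrite r1' in pr.
- by have := congr1 GLval (expg_order u); rewrite GLvalX ou.
set d := \det (GLval u).
have d0 : d != 0 by apply: GL_det.
have dr : d ^+ r = 1.
  by have := congr1 (fun M => \det (GLval M)) (expg_order u); rewrite /= GLvalX ou detX2 det1.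
have dq : d ^+ (q - 1) = 1.
  by apply: (mulIf d0); rewrite mul1r -exprSr subn1 prednK // expf_card.
apply/eqP; apply: contraR rq => d1; exact: bez pr dr dq d1.
Qed.
End ZExist.
Section TrJ.
Local Open Scope ring_scope.
Lemma trJ (F : finFieldType) n (u v : {'GL_n[F]}) : \tr (GLval (u ^ v)%g) = \tr (GLval u).
Proof.
rewrite /conjg !GL_MxE GL_VxE mxtrace_mulC mulmxK //.
exact: GL_unitmx.
Qed.
End TrJ.
Local Open Scope group_scope.

Theorem lemma5p7 (F : finFieldType) (f r : nat) (R : {group {'GL_4[F]}}) :
  #|F| = (2 ^ f)%N -> (1 < f)%N ->
  (if f != 3%N then prime r /\ mult_order_is 2 r (2 * f) else r = 7%N) ->
  R \in 'Syl_r(Sp4 F) ->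
  forall a : {perm {'GL_4[F]}}, a \in Ahat0 F ->
    (forall x, x \in R -> a x = x) ->
    a \in InnS F.
Proof.
move=> cF f1 hr sylR a Aa fixR.
have two0 : (1 + 1 : F)%R = 0%R.
  have h2 := card_finPcharP cF (isT : prime 2).
  by rewrite -mulr2n (pcharf0 h2).
have [pr oddr ne [z [dz zr z1]]] : [/\ prime r, odd r,
    (forall e, 0 < e -> e < f -> ~~ (r %| (2 ^ e) ^ 2 - 1))
  & exists z : 'M[F]_2, [/\ (\det z = 1)%R, (z ^+ r = 1)%R & (z != 1)%R]].
  have [f3|f3] := eqVneq f 3; rewrite ?f3 /= in hr.
    rewrite hr; split => //.
      by move=> e e0; rewrite f3; case: e e0 => [|[|[|]]].
    by apply: z_exists_7 => //; rewrite cF f3.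
  case: hr => pr mo; have [r1 [f0 [h2f hk]]] := mo.
  split=> //.
  - case: (even_prime pr) => // r2; move: h2f; rewrite r2 modn2 oddX /=.
    rewrite orbF (_ : (2 * f == 0)%N = false) //; lia.
  - move=> e e0 ef; apply/negP => h; have := hk (2 * e)%N; apply; try lia.
    by apply/eqP; rewrite eqn_mod_dvd ?expn_gt0 // mulnC expnM.
  - exact: z_exists_gen cF pr mo.
have /HsetP [Aut_a [g Sg [s hs Ea]]] : a \in Hset F := subsetP (Ahat0_sub F) a Aa.
have sylR' : r.-Sylow(Sp4 F) R by move: sylR; rewrite inE.
have RS : R \subset Sp4 F := pHall_sub sylR'.
have sid : forall x, s x = x.
  move=> x; apply/eqP; apply/negPn/negP => sx.
  have zu : z \in unitmx by rewrite unitmxE dz unitr1.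
  have eu : emb z \in unitmx.
    have : (emb z *m emb (invmx z) = 1%:M)%R by rewrite -emb_mul mulmxV // emb1.
    by case/mulmx1_unit.
  pose y0 : {'GL_4[F]} := insubd (1%g : {'GL_4[F]}) (emb z).
  have y0E : GLval y0 = emb z by rewrite /y0 insubdK.
  have Sy0 : y0 \in Sp4 F by rewrite inE y0E emb_sp.
  have y0r : (y0 ^+ r)%g = 1%g.
    by apply: GLval_inj; rewrite GLvalX y0E -embX zr emb1.
  have py0 : r.-group <[y0]>.
    rewrite /pgroup; apply: pnat_dvd (pnat_id pr).
    by rewrite order_dvdn y0r.
  have sub0 : <[y0]> \subset Sp4 F by rewrite cycle_subG.
  have [h Sh sub] := Sylow_subJ sylR' sub0 py0.
  have Ry : y0 ^ h^-1 \in R by rewrite -mem_conjg (subsetP sub) // cycle_id.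
  have Sy : y0 ^ h^-1 \in Sp4 F by apply: (subsetP RS).
  have := fixR _ Ry; rewrite Ea // => /(congr1 (fun u => \tr (GLval u))%R).
  rewrite (trace_mapGL hs) !trJ y0E emb_tr.
  rewrite -addrA two0 addr0.
  by move=> st; have [e [e0 ef hd]] := key hs two0 cF pr oddr dz zr z1 st (ex_intro _ x sx); move: (ne e e0 ef); rewrite hd.
rewrite inE Aut_a /=; apply/exists_inP; exists g => //; apply/forall_inP => y Sy.
rewrite Ea //; apply/eqP; apply: GLval_inj; rewrite (mapGLE hs) map_mx_id //.
Qed.
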